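(* There exist an ASCM $\mathcal{M}^*$ over $\{\mathbf{V},\mathbf{I}\}$ with causal diagram $\mathcal{G}$, sets $\mathbf{X}\subseteq\mathbf{W}\subseteq\mathbf{V}$, a value $\mathbf{x}'$ of $\mathbf{X}$, values $\mathbf{w},\mathbf{w}'$ of $\mathbf{W}$, and a variable $V\in\mathbf{W}\setminus\mathbf{X}$ whose value $v$ in $\mathbf{w}$ differs from its value $v'$ in $\mathbf{w}'$, such that the lower end $l$ of the optimal bound of the normalized feature counterfactual query $P(\mathbf{w}'_{\mathbf{x}'}\mid\mathbf{w})=P(\mathbf{W}_{\mathbf{x}'}=\mathbf{w}'\mid\mathbf{W}=\mathbf{w})$, derived from $P^{\mathcal{M}^*}(\mathbf{V})$ and $\mathcal{G}$, satisfies $0<l<1$.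
   Context: SCMs, interventions $do(\mathbf{x})$, and counterfactual distributions $P^{\mathcal{M}}(\mathbf{y}_{\mathbf{x}},\dots)=\int\mathbf{1}[\mathbf{Y}_{\mathbf{x}}(\mathbf{u})=\mathbf{y},\dots]\,dP(\mathbf{u})$ are standard; the causal diagram has directed edges from arguments of mechanisms and bidirected edges between endogenous variables with dependent exogenous arguments. An ASCM is an SCM $\langle\mathbf{U},\{\mathbf{V},\mathbf{I}\},\mathcal{F},P(\mathbf{U})\rangle$ with $\mathbf{U}=\{\mathbf{U}_0,\mathbf{U}_{\mathbf{I}}\}$, observed generative factors $\mathbf{V}$ (discrete finite domains) with mechanisms depending on $\mathbf{U}_0,\mathbf{V}$, and an $m$-dimensional image $\mathbf{I}=f_{\mathbf{I}}(\mathbf{V},\mathbf{U}_{\mathbf{I}})$ with $f_{\mathbf{I}}$ invertible w.r.t. $\mathbf{V}$. The optimal bound of $P(\mathbf{w}'_{\mathbf{x}'}\mid\mathbf{w})$ derived from $P(\mathbf{V})$ and $\mathcal{G}$ is the interval $[l,r]$ with $l,r$ the minimum and maximum of $P^{\mathcal{M}}(\mathbf{W}_{\mathbf{x}'}=\mathbf{w}'\mid\mathbf{W}=\mathbf{w})$ over all SCMs $\mathcal{M}$ over $\mathbf{V}$ whose causal diagram agrees with $\mathcal{G}$ restricted to $\mathbf{V}$ and with $P^{\mathcal{M}}(\mathbf{V})=P(\mathbf{V})$. *)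

(* Defs.v *)
From HB Require Import structures.
From mathcomp Require Import all_boot all_order all_algebra.
From mathcomp Require Import all_classical all_reals all_analysis.
Unset Printing Implicit Defensive.
Import Order.TTheory GRing.Theory Num.Theory.
Local Open Scope classical_set_scope.
Local Open Scope ring_scope.

(* Endogenous variables V = {V_0, ..., V_(n-1)}; V_i has the finite discrete
   domain 'I_(k i).+1 (any nonempty finite domain).  A value of a subset X of V is represented by an assignment
   of which only the coordinates in X are used. *)
Definition assignment (n : nat) (k : 'I_n -> nat) := forall i : 'I_n, 'I_(k i).+1.

Arguments assignment {n}.

Definition agree_on {n} {k : 'I_n -> nat} (W : {set 'I_n}) (s t : assignment k) : Prop :=
  forall i, i \in W -> s i = t i.

Definition indep_rv (R : realType) d (Om : measurableType d) (P : probability Om R)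
  d1 d2 (T1 : measurableType d1) (T2 : measurableType d2)
  (X1 : Om -> T1) (X2 : Om -> T2) : Prop :=
  forall (A : set T1) (B : set T2), measurable A -> measurable B ->
    P (X1 @^-1` A `&` X2 @^-1` B) = (P (X1 @^-1` A) * P (X2 @^-1` B))%E.

(* The exogenous variables U live on a general
   probability space (Om, Pr); U_i : Om -> T_i is the (tuple of) exogenous
   argument(s) of the mechanism of V_i; pa i is the set of endogenous
   arguments of f_i. *)
Record SCM (R : realType) (n : nat) (k : 'I_n -> nat) := {
  scm_dO : measure_display;
  scm_Om : measurableType scm_dO;
  scm_P : probability scm_Om R;
  scm_dT : 'I_n -> measure_display;
  scm_T : forall i, measurableType (scm_dT i);
  scm_U : forall i, scm_Om -> scm_T i;
  scm_U_meas : forall i, measurable_fun setT (scm_U i);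
  scm_pa : 'I_n -> {set 'I_n};
  scm_f : forall i, assignment k -> scm_T i -> 'I_(k i).+1;
  scm_f_local : forall i (s s' : assignment k) t,
      (forall j, j \in scm_pa i -> s j = s' j) -> scm_f i s t = scm_f i s' t;
  scm_f_meas : forall i (s : assignment k) (y : 'I_(k i).+1),
      measurable [set t | scm_f i s t = y];
  scm_acyclic : exists rk : 'I_n -> nat,
      forall i j, j \in scm_pa i -> (rk j < rk i)%N
}.

Arguments scm_f {R n k} s0 i.
Arguments scm_U {R n k} s0 i.
Arguments scm_pa {R n k} s0 i.
Arguments scm_P {R n k} s0.
Arguments scm_Om {R n k} s0.
Arguments scm_T {R n k} s0 i.

Definition default_assignment {n} (k : 'I_n -> nat) : assignment k := fun i => ord0.

(* Solution of the submodel M_x (intervention do(X = x)) at exogenous outcome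
   om: since the diagram is acyclic, n rounds of evaluation reach the unique
   solution of the structural equations. *)
Arguments indep_rv {R d Om} P {d1 d2 T1 T2}.

Definition scm_sol {R n k} (M : @SCM R n k) (X : {set 'I_n}) (x : assignment k)
  (om : scm_Om M) : assignment k :=
  iter n (fun s : assignment k => fun i =>
            if i \in X then x i else scm_f M i s (scm_U M i om))
       (default_assignment k).

Definition scm_obs_sol {R n k} (M : @SCM R n k) (om : scm_Om M) : assignment k :=
  scm_sol M (finset.set0 : {set 'I_n}) (default_assignment k) om.

Definition scm_PV {R n k} (M : @SCM R n k) (v : assignment k) : \bar R :=
  scm_P M [set om | scm_obs_sol M om = v].

Definition scm_query {R n k} (M : @SCM R n k) (X : {set 'I_n}) (x' : assignment k)
  (W : {set 'I_n}) (w w' : assignment k) : R :=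
  fine (scm_P M [set om | agree_on W (scm_sol M X x' om) w'
                         /\ agree_on W (scm_obs_sol M om) w])
  / fine (scm_P M [set om | agree_on W (scm_obs_sol M om) w]).

(* Causal diagrams (ADMGs) over a finite node type N: parent sets (directed
   edges j -> i for j in gpa i) and a bidirected-edge relation. *)
Record ADMG (N : finType) := { gpa : N -> {set N}; gbi : N -> N -> Prop }.
Arguments gpa {N}.
Arguments gbi {N}.

Definition scm_dep {R n k} (M : @SCM R n k) (i j : 'I_n) : Prop :=
  ~ indep_rv (scm_P M) (scm_U M i) (scm_U M j).

Definition scm_has_diagram {R n k} (M : @SCM R n k) (G : ADMG 'I_n) : Prop :=
  (forall i, scm_pa M i = gpa G i) /\
  (forall i j, i <> j -> (scm_dep M i j <-> gbi G i j)).

(* An ASCM: an SCM over V (exogenous part U_0) together with an image node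
   I = f_I(V, U_I) in R^m, f_I invertible w.r.t. V. *)
Record ASCM (R : realType) (n : nat) (k : 'I_n -> nat) := {
  ascm_V : @SCM R n k;
  ascm_m : nat;
  ascm_dI : measure_display;
  ascm_TI : measurableType ascm_dI;
  ascm_UI : scm_Om ascm_V -> ascm_TI;
  ascm_UI_meas : measurable_fun setT ascm_UI;
  ascm_fI : assignment k -> ascm_TI -> 'rV[R]_ascm_m;
  ascm_fI_inv : exists g : 'rV[R]_ascm_m -> assignment k,
      forall v t, g (ascm_fI v t) = v
}.

(* Causal diagram of an ASCM over the nodes {V, I}: Some i is V_i, None is I. *)
Arguments ascm_V {R n k}.
Arguments ascm_UI {R n k}.

Definition ascm_diagram {R n k} (M : @ASCM R n k) : ADMG (option 'I_n) :=
  {| gpa := fun a => match a with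
                     | Some i => (Some @: scm_pa (ascm_V M) i)%SET
                     | None => (Some @: (finset.setT : {set 'I_n}))%SET
                     end;
     gbi := fun a b => match a, b with
                       | Some i, Some j => i <> j /\ scm_dep (ascm_V M) i j
                       | Some i, None | None, Some i =>
                           ~ indep_rv (scm_P (ascm_V M))
                               (scm_U (ascm_V M) i) (ascm_UI M)
                       | None, None => False
                       end |}.

Definition restrict_V {n} (G : ADMG (option 'I_n)) : ADMG 'I_n :=
  {| gpa := fun i => finset.finset (fun j : 'I_n => Some j \in gpa G (Some i));
     gbi := fun i j => gbi G (Some i) (Some j) |}.

Definition is_opt_lower_bound {R : realType} {n} {k : 'I_n -> nat}
  (G : ADMG 'I_n) (PV : assignment k -> \bar R)
  (X : {set 'I_n}) (x' : assignment k) (W : {set 'I_n}) (w w' : assignment k)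
  (l : R) : Prop :=
  (forall M : @SCM R n k, scm_has_diagram M G -> (forall v, scm_PV M v = PV v) ->
     l <= scm_query M X x' W w w') /\
  (forall l' : R, (forall M : @SCM R n k, scm_has_diagram M G ->
                     (forall v, scm_PV M v = PV v) -> l' <= scm_query M X x' W w w') ->
     l' <= l).

(* Main.v *)
Require Import Defs.
From HB Require Import structures.
From mathcomp Require Import all_boot all_order all_algebra.
From mathcomp Require Import all_classical all_reals all_analysis.
Import Order.TTheory GRing.Theory Num.Theory.
Local Open Scope classical_set_scope.
Local Open Scope ring_scope.
From mathcomp Require Import lra.

Section Abs.
Variable R : realType.
Context d (Om : measurableType d) (P : probability Om R).

Let pr (S : set Om) : R := fine (P S).
Let prE S : measurable S -> P S = (pr S)%:E.
Proof. by move=> mS; rewrite /pr fineK // fin_num_measure. Qed.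
Let pr_ge0 S : 0 <= pr S.
Proof. by rewrite /pr fine_ge0 // measure_ge0. Qed.

Let part (A B : set Om) : measurable A -> measurable B ->
  A `&` B = set0 -> A `|` B = setT -> pr A + pr B = 1.
Proof.
move=> mA mB AB0 ABT.
have : (P A + P B = 1)%E by rewrite -(measureU P mA mB AB0) ABT; exact: probability_setT.
rewrite (prE _ mA) (prE _ mB).
by rewrite -EFinD => -[].
Qed.

Lemma abstract_half (A0 A1 B00 B01 B10 B11 : set Om) :
  measurable A0 -> measurable A1 -> measurable B00 -> measurable B01 ->
  measurable B10 -> measurable B11 ->
  A0 `&` A1 = set0 -> A0 `|` A1 = setT ->
  B00 `&` B01 = set0 -> B00 `|` B01 = setT ->
  B10 `&` B11 = set0 -> B10 `|` B11 = setT ->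
  P (A0 `&` B00) = (P A0 * P B00)%E ->
  P (A0 `&` B01) = (P A0 * P B01)%E ->
  P (A1 `&` B10) = (P A1 * P B10)%E ->
  P (A1 `&` B11) = (P A1 * P B11)%E ->
  P (A0 `&` (B00 `&` B11)) = (P A0 * P (B00 `&` B11))%E ->
  P (A0 `&` B00) = (1/2 : R)%:E ->
  P (A0 `&` B01) = 0%E ->
  P (A1 `&` B10) = (1/4 : R)%:E ->
  P (A1 `&` B11) = (1/4 : R)%:E ->
  fine (P (A0 `&` (B00 `&` B11))) / fine (P (A0 `&` B00)) = 1/2.
Proof.
move=> mA0 mA1 mB00 mB01 mB10 mB11 a0 aT b0 bT c0 cT i1 i2 i3 i4 i5 h1 h2 h3 h4.
have mBB : measurable (B00 `&` B11) by exact: measurableI.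
have pa := part _ _ mA0 mA1 a0 aT.
have pb := part _ _ mB00 mB01 b0 bT.
have pc := part _ _ mB10 mB11 c0 cT.
rewrite i5 h1 /= (prE _ mA0) (prE _ mBB) -EFinM /=.
move: i1 i2 i3 i4.
rewrite h1 h2 h3 h4 (prE _ mA0) (prE _ mA1) (prE _ mB00) (prE _ mB01) (prE _ mB10) (prE _ mB11).
rewrite -!EFinM => -[e1] [e2] [e3] [e4].
have hD : P B11 = (P (B11 `\` B00) + P (B11 `&` B00))%E by exact: measureDI.
have sub : B11 `\` B00 `<=` B01.
  move=> x [_ nB]; have : setT x by [].
  by rewrite -bT => -[].
have mD : measurable (B11 `\` B00) by exact: measurableD.
have le : (P (B11 `\` B00) <= P B01)%E by exact: (le_measure P (mem_set mD) (mem_set mB01) sub).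
move: hD le; rewrite (prE _ mB11) (prE _ mD) (prE _ mB01) setIC (prE _ mBB) -EFinD lee_fin => -[hD] le.
have ge := pr_ge0 (B11 `\` B00).
have a0v : pr A0 = 1/2.
  have : pr A0 * (pr B00 + pr B01) = 1/2 by rewrite mulrDr -e1 -e2; lra.
  by rewrite pb mulr1.
have b01 : pr B01 = 0.
  by move: e2; rewrite a0v => /esym /eqP; rewrite mulf_eq0 => /orP[|/eqP//]; lra.
have a1v : pr A1 = 1/2 by lra.
have b11 : pr B11 = 1/2.
  by move: e4; rewrite a1v => /(congr1 (fun x => 2 * x)); lra.
have cv : pr (B00 `&` B11) = 1/2 by lra.
rewrite a0v cv; lra.
Qed.
End Abs.

Section Ex.
Variable R : realType.
Definition kk : 'I_2 -> nat := fun _ => 1%N.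
Definition iX : 'I_2 := ord0.
Definition iY : 'I_2 := ord_max.
Definition o1 : 'I_2 := ord_max.
Definition Pst : probability (bool * bool)%type R :=
  (bernoulli_prob (1/2 : R) \x bernoulli_prob (1/2 : R))%E.
Definition Ust (i : 'I_2) (om : bool * bool) : bool := if i == iX then om.1 else om.2.
Lemma Ust_meas i : measurable_fun setT (Ust i).
Proof. rewrite /Ust; case: (i == iX); [exact: measurable_fst | exact: measurable_snd]. Qed.
Definition past (i : 'I_2) : {set 'I_2} := if i == iX then finset.set0 else (finset.set1 iX).
Definition fst_ (i : 'I_2) (s : assignment kk) (t : bool) : 'I_(kk i).+1 :=
  if i == iX then (if t then o1 else ord0) else (if (s iX == o1) && t then o1 else ord0).
Lemma fst_local i (s s' : assignment kk) t :
  (forall j, j \in past i -> s j = s' j) -> fst_ i s t = fst_ i s' t.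
Proof.
rewrite /fst_ /past; case: (i == iX) => //= H.
by rewrite H // inE.
Qed.
Lemma fst_meas i (s : assignment kk) (y : 'I_(kk i).+1) : measurable [set t | fst_ i s t = y].
Proof. by []. Qed.
Lemma st_acyclic : exists rk : 'I_2 -> nat, forall i j, j \in past i -> (rk j < rk i)%N.
Proof.
exists (fun i => nat_of_ord i) => i j; rewrite /past.
case: ifP => Hi; first by rewrite inE.
rewrite inE => /eqP ->; move: Hi; case: i => [[|[|m]] Hm] //=.
Qed.
Definition Sst : @SCM R 2 kk := @Build_SCM R 2 kk _ _ Pst (fun _ => _) (fun _ => bool) Ust Ust_meas past fst_ fst_local fst_meas st_acyclic.
Definition fIst (v : assignment kk) (t : bool) : 'rV[R]_2 := \row_(i < 2) ((v i : nat)%:R).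
Lemma fIst_inv : exists g : 'rV[R]_2 -> assignment kk, forall v t, g (fIst v t) = v.
Proof.
exists (fun r => fun i => if r ord0 i == 0 then ord0 else o1) => v t.
apply: functional_extensionality_dep => i; rewrite /fIst mxE.
case: (v i) => [[|[|m]] Hm] //=; first by rewrite eqxx; apply/val_inj.
by rewrite oner_eq0; apply/val_inj.
Qed.
Definition Ast : @ASCM R 2 kk :=
  @Build_ASCM R 2 kk Sst 2 _ bool (fun om => om.1) measurable_fst fIst fIst_inv.

Definition Gst := restrict_V (ascm_diagram Ast).

Lemma Gst_pa i : gpa Gst i = past i.
Proof.
by apply/setP => j; rewrite /Gst /= inE mem_imset //; move=> a b [].
Qed.

Lemma I2_cases (i : 'I_2) : i = iX \/ i = iY.
Proof. by case: i => [[|[|m]] Hm]; [left; apply/val_inj|right; apply/val_inj|]. Qed.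
Lemma I2v_cases (i : 'I_2) : i = ord0 \/ i = o1.
Proof. by case: i => [[|[|m]] Hm]; [left; apply/val_inj|right; apply/val_inj|]. Qed.

Lemma assign_eq (s t : assignment kk) : (s = t) <-> (s iX = t iX /\ s iY = t iY).
Proof.
split => [-> //|[h1 h2]]; apply: functional_extensionality_dep => i.
by case: (I2_cases i) => ->.
Qed.

Lemma agree_T (s t : assignment kk) :
  agree_on finset.setT s t <-> (s iX = t iX /\ s iY = t iY).
Proof.
split => [h|[h1 h2] i _]; first by split; apply: h; rewrite inE.
by case: (I2_cases i) => ->.
Qed.

Section Gen.
Variable M : @SCM R 2 kk.
Hypothesis paX : scm_pa M iX = finset.set0.
Hypothesis paY : scm_pa M iY = finset.set1 iX.
Let dd := default_assignment kk.
Let fX om : 'I_2 := scm_f M iX dd (scm_U M iX om).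

Lemma obsX om : scm_obs_sol M om iX = fX om.
Proof.
rewrite /scm_obs_sol /scm_sol /=; rewrite inE; apply: scm_f_local => j.
by rewrite paX inE.
Qed.

Lemma obsY om : scm_obs_sol M om iY = scm_f M iY (fun _ => fX om) (scm_U M iY om).
Proof.
rewrite /scm_obs_sol /scm_sol /=; rewrite inE; apply: scm_f_local => j.
rewrite paY inE => /eqP ->; rewrite inE; apply: scm_f_local => k.
by rewrite paX inE.
Qed.

Lemma solX (x : assignment kk) om : scm_sol M (finset.set1 iX) x om iX = x iX.
Proof. by rewrite /scm_sol /= inE eqxx. Qed.

Lemma solY (x : assignment kk) om :
  scm_sol M (finset.set1 iX) x om iY = scm_f M iY (fun _ => x iX) (scm_U M iY om).
Proof.
rewrite /scm_sol /= inE /=; apply: scm_f_local => j.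
by rewrite paY inE => /eqP -> /=.
Qed.

Definition AX (a : 'I_2) := scm_U M iX @^-1` [set t | scm_f M iX dd t = a].
Definition BY (a b : 'I_2) := scm_U M iY @^-1` [set t | scm_f M iY (fun _ => a) t = b].

Definition mkv (a b : 'I_2) : assignment kk := fun i => if i == iX then a else b.

Lemma PV_set a b : [set om | scm_obs_sol M om = mkv a b] = AX a `&` BY a b.
Proof.
apply/seteqP; split => om /=.
  move/assign_eq; rewrite obsX obsY /mkv /= => -[h1 h2].
  by split; rewrite /AX /BY /= -?h1 //; rewrite h1 in h2.
move=> [h1 h2]; apply/assign_eq; rewrite obsX obsY /mkv /=.
by split => //; rewrite /fX h1.
Qed.

Lemma mAX a : measurable (AX a).
Proof.
have := @scm_U_meas _ _ _ M iX measurableT _ (@scm_f_meas _ _ _ M iX dd a).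
by rewrite setTI.
Qed.
Lemma mBY a b : measurable (BY a b).
Proof.
have := @scm_U_meas _ _ _ M iY measurableT _ (@scm_f_meas _ _ _ M iY (fun _ => a) b).
by rewrite setTI.
Qed.

Lemma AX_part : AX ord0 `&` AX o1 = set0 /\ AX ord0 `|` AX o1 = setT.
Proof.
split; apply/seteqP; split => om //=.
- by rewrite /AX /= => -[->].
- move=> _; rewrite /AX /=; by case: (I2v_cases (scm_f M iX dd (scm_U M iX om))) => ->; [left|right].
Qed.
Lemma BY_part a : BY a ord0 `&` BY a o1 = set0 /\ BY a ord0 `|` BY a o1 = setT.
Proof.
split; apply/seteqP; split => om //=.
- by rewrite /BY /= => -[->].
- move=> _; rewrite /BY /=.
  by case: (I2v_cases (scm_f M iY (fun _ => a) (scm_U M iY om))) => ->; [left|right].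
Qed.

Lemma query_sets :
  [set om | agree_on finset.setT (scm_sol M (finset.set1 iX) (mkv o1 o1) om) (mkv o1 o1)
         /\ agree_on finset.setT (scm_obs_sol M om) (mkv ord0 ord0)]
  = AX ord0 `&` (BY ord0 ord0 `&` BY o1 o1)
 /\ [set om | agree_on finset.setT (scm_obs_sol M om) (mkv ord0 ord0)]
  = AX ord0 `&` BY ord0 ord0.
Proof.
split; apply/seteqP; split => om /=.
- move=> [/agree_T [_ h1] /agree_T [h2 h3]].
  rewrite solY in h1; rewrite obsX in h2; rewrite obsY in h3.
  move: h1 h2 h3; rewrite /AX /BY /mkv /= => h1 h2 h3.
  split => //; split => //; apply: (etrans _ h3); apply: scm_f_local => j _; exact (esym h2).
- rewrite /AX /BY /= => -[h2 [h3 h1]]; split; apply/agree_T.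
    by rewrite solX solY.
  rewrite obsX obsY; split => //; apply: (etrans _ h3); apply: scm_f_local => j _; exact h2.
- move=> /agree_T [h2 h3]; rewrite obsX in h2; rewrite obsY in h3.
  rewrite /AX /BY /=; move: h2 h3; rewrite /mkv /= => h2 h3.
  split => //; apply: (etrans _ h3); apply: scm_f_local => j _; exact (esym h2).
- rewrite /AX /BY /= => -[h2 h3]; apply/agree_T.
  rewrite obsX obsY; split => //; apply: (etrans _ h3); apply: scm_f_local => j _; exact h2.
Qed.

Hypothesis ind : indep_rv (scm_P M) (scm_U M iX) (scm_U M iY).
Hypothesis PV00 : scm_P M (AX ord0 `&` BY ord0 ord0) = (1/2 : R)%:E.
Hypothesis PV01 : scm_P M (AX ord0 `&` BY ord0 o1) = 0%E.
Hypothesis PV10 : scm_P M (AX o1 `&` BY o1 ord0) = (1/4 : R)%:E.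
Hypothesis PV11 : scm_P M (AX o1 `&` BY o1 o1) = (1/4 : R)%:E.

Lemma query_half :
  scm_query M (finset.set1 iX) (mkv o1 o1) finset.setT (mkv ord0 ord0) (mkv o1 o1) = 1/2.
Proof.
rewrite /scm_query; case: query_sets => -> ->.
have [a0 aT] := AX_part.
have [b0 bT] := BY_part ord0.
have [c0 cT] := BY_part o1.
apply: (@abstract_half _ _ _ _ (AX ord0) (AX o1) (BY ord0 ord0) (BY ord0 o1) (BY o1 ord0) (BY o1 o1)) => //; try exact: mAX; try exact: mBY.
- exact: (ind _ _ (@scm_f_meas _ _ _ M iX dd ord0) (@scm_f_meas _ _ _ M iY _ ord0)).
- exact: (ind _ _ (@scm_f_meas _ _ _ M iX dd ord0) (@scm_f_meas _ _ _ M iY _ o1)).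
- exact: (ind _ _ (@scm_f_meas _ _ _ M iX dd o1) (@scm_f_meas _ _ _ M iY _ ord0)).
- exact: (ind _ _ (@scm_f_meas _ _ _ M iX dd o1) (@scm_f_meas _ _ _ M iY _ o1)).
- exact: (ind _ _ (@scm_f_meas _ _ _ M iX dd ord0) (measurableI _ _ (@scm_f_meas _ _ _ M iY _ ord0) (@scm_f_meas _ _ _ M iY _ o1))).
Qed.

End Gen.
Local Notation Pb := (bernoulli_prob (1/2 : R)).

Lemma Pb1 (b : bool) : Pb [set b] = (1/2 : R)%:E.
Proof.
rewrite /bernoulli_prob ifT; last by apply/andP; split; lra.
rewrite fsbig_set1 /bernoulli_pmf; case: b => //; congr (_%:E); lra.
Qed.

Lemma Pst_rect (S1 S2 : set bool) :
  Pst (fst @^-1` S1 `&` snd @^-1` S2) = (Pb S1 * Pb S2)%E.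
Proof.
rewrite /Pst.
have -> : fst @^-1` S1 `&` snd @^-1` S2 = S1 `*` S2 by [].
exact: product_measure1E.
Qed.

Lemma PbT : Pb setT = 1%E.
Proof. exact: probability_setT. Qed.
Lemma Pb0 : Pb set0 = 0%E.
Proof. exact: measure0. Qed.

Lemma Sst_indep : indep_rv (scm_P Sst) (scm_U Sst iX) (scm_U Sst iY).
Proof.
move=> A B _ _.
have e : forall S : set bool, (@fst bool bool) @^-1` S = fst @^-1` S `&` (@snd bool bool) @^-1` setT.
  by move=> S; apply/seteqP; split => [x h|x [h _]] //; split.
have e2 : forall S : set bool, (@snd bool bool) @^-1` S = (@fst bool bool) @^-1` setT `&` snd @^-1` S.
  by move=> S; apply/seteqP; split => [x h|x [_ h]] //; split.
have h1 := Pst_rect A B; have h2 := Pst_rect A setT; have h3 := Pst_rect setT B.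
rewrite -(e A) in h2; rewrite -(e2 B) in h3.
change (Pst ((@fst bool bool) @^-1` A `&` (@snd bool bool) @^-1` B) =
  (Pst ((@fst bool bool) @^-1` A) * Pst ((@snd bool bool) @^-1` B))%E).
by rewrite h1 h2 h3 PbT mule1 mul1e.
Qed.

Lemma Sst_paX : scm_pa Sst iX = finset.set0.
Proof. by []. Qed.
Lemma Sst_paY : scm_pa Sst iY = finset.set1 iX.
Proof. by []. Qed.

Lemma Sst_AXBY a b : AX Sst a `&` BY Sst a b =
  fst @^-1` [set t | fst_ iX (default_assignment kk) t = a]
  `&` snd @^-1` [set t | fst_ iY (fun _ => a) t = b].
Proof. by []. Qed.

Lemma Sst_PV00 : scm_P Sst (AX Sst ord0 `&` BY Sst ord0 ord0) = (1/2 : R)%:E.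
Proof.
rewrite Sst_AXBY.
have -> : [set t | fst_ iX (default_assignment kk) t = ord0] = [set false].
  by apply/seteqP; split => -[].
have -> : [set t | fst_ iY (fun _ => ord0) t = ord0] = setT.
  by apply/seteqP; split => -[].
by rewrite Pst_rect Pb1 PbT mule1.
Qed.
Lemma Sst_PV01 : scm_P Sst (AX Sst ord0 `&` BY Sst ord0 o1) = 0%E.
Proof.
rewrite Sst_AXBY.
have -> : [set t | fst_ iY (fun _ => ord0) t = o1] = set0.
  by apply/seteqP; split => -[].
by rewrite Pst_rect Pb0 mule0.
Qed.
Lemma Sst_PV10 : scm_P Sst (AX Sst o1 `&` BY Sst o1 ord0) = (1/4 : R)%:E.
Proof.
rewrite Sst_AXBY.
have -> : [set t | fst_ iX (default_assignment kk) t = o1] = [set true].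
  by apply/seteqP; split => -[].
have -> : [set t | fst_ iY (fun _ => o1) t = ord0] = [set false].
  by apply/seteqP; split => -[].
rewrite Pst_rect !Pb1 -EFinM; congr (_%:E); lra.
Qed.
Lemma Sst_PV11 : scm_P Sst (AX Sst o1 `&` BY Sst o1 o1) = (1/4 : R)%:E.
Proof.
rewrite Sst_AXBY.
have e1 : [set t | fst_ iX (default_assignment kk) t = o1] = [set true].
  by apply/seteqP; split => -[].
have e2 : [set t | fst_ iY (fun _ => o1) t = o1] = [set true].
  by apply/seteqP; split => -[].
rewrite e1 ?e2.
rewrite Pst_rect !Pb1 -EFinM; congr (_%:E); lra.
Qed.

Lemma compat_half (M : @SCM R 2 kk) :
  scm_has_diagram M Gst -> (forall v, scm_PV M v = scm_PV Sst v) ->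
  scm_query M (finset.set1 iX) (mkv o1 o1) finset.setT (mkv ord0 ord0) (mkv o1 o1) = 1/2.
Proof.
move=> [hpa hbi] hPV.
have paX : scm_pa M iX = finset.set0 by rewrite hpa Gst_pa.
have paY : scm_pa M iY = finset.set1 iX by rewrite hpa Gst_pa.
have ind : indep_rv (scm_P M) (scm_U M iX) (scm_U M iY).
  apply: contrapT => hd.
  have : gbi Gst iX iY by apply/(hbi iX iY) => //.
  by move=> [_]; apply; exact: Sst_indep.
have PVe a b : scm_P M (AX M a `&` BY M a b) = scm_P Sst (AX Sst a `&` BY Sst a b).
  rewrite -(@PV_set M paX paY) -(@PV_set Sst Sst_paX Sst_paY).
  exact: hPV.
apply: query_half => //; rewrite PVe.
- exact: Sst_PV00.
- exact: Sst_PV01.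
- exact: Sst_PV10.
- exact: Sst_PV11.
Qed.

Lemma Sst_compat : scm_has_diagram Sst Gst.
Proof.
split; first by move=> i; rewrite Gst_pa.
by move=> i j ij; split => [h|[]//]; split.
Qed.

End Ex.

Theorem proposition2 (R : realType) :
  exists (n : nat) (k : 'I_n -> nat) (Mstar : @ASCM R n k)
         (X W : {set 'I_n}) (x' w w' : assignment k) (V : 'I_n),
    X \subset W /\ V \in W /\ V \notin X /\ w V <> w' V /\
    exists l : R,
      is_opt_lower_bound (restrict_V (ascm_diagram Mstar))
        (scm_PV (ascm_V Mstar)) X x' W w w' l /\
      0 < l /\ l < 1.
Proof.
exists 2%N, kk, (Ast R), (finset.set1 iX), finset.setT, (mkv o1 o1), (mkv ord0 ord0),
  (mkv o1 o1), iY.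
split; first exact: finset.subsetT.
split; first by rewrite inE.
split; first by rewrite inE.
split; first by [].
exists (1/2); split; last by split; lra.
split.
- by move=> M hM hPV; rewrite (@compat_half R M hM hPV).
- move=> l' hl'; have := hl' (Sst R) (Sst_compat R) (fun v => erefl).
  by rewrite (@compat_half R (Sst R) (Sst_compat R) (fun v => erefl)).
Qed.
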